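(* Let $G$ be a $2K_2$-free graph, let $a,b$ be adjacent vertices of $G$, and let $X$ be a minimal dominating set of $G$ with $a,b\in X$ and $|X|>\alpha(G)$. Let $N$ be the set of vertices not in $\{a,b\}$ adjacent to at least one of $a,b$ and let $Y=X\cap N$. Then $|Y|=1$ and the unique vertex of $Y$ is adjacent to both $a$ and $b$.
   Context: All graphs are finite, simple and undirected. $2K_2$-free means no induced subgraph isomorphic to the disjoint union of two edges. $\alpha(G)$ is the maximum size of an independent set of $G$. A dominating set is a vertex set $D$ such that every vertex outside $D$ has a neighbour in $D$; it is minimal if no proper subset is dominating. *)

(* Defs.v *)
From mathcomp Require Import all_boot.
Set Implicit Arguments. Unset Strict Implicit. Unset Printing Implicit Defensive.

Definition simple_graph (T : finType) (e : rel T) : Prop :=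
  symmetric e /\ irreflexive e.

Definition independent (T : finType) (e : rel T) (S : {set T}) : bool :=
  [forall x in S, forall y in S, ~~ e x y].

Definition alpha (T : finType) (e : rel T) : nat :=
  \max_(S : {set T} | independent e S) #|S|.

Definition dominating (T : finType) (e : rel T) (D : {set T}) : bool :=
  [forall x, (x \notin D) ==> [exists y in D, e x y]].

Definition minimal_dominating (T : finType) (e : rel T) (D : {set T}) : bool :=
  dominating e D && [forall D' : {set T}, (D' \proper D) ==> ~~ dominating e D'].

Definition twoK2_free (T : finType) (e : rel T) : Prop :=
  ~ exists x y u v : T,
      [/\ uniq [:: x; y; u; v], e x y, e u v &
          [&& ~~ e x u, ~~ e x v, ~~ e y u & ~~ e y v]].

(* Main.v *)
Require Import Defs.
From mathcomp Require Import all_boot.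
Set Implicit Arguments. Unset Strict Implicit. Unset Printing Implicit Defensive.

Definition priv (T : finType) (e : rel T) (X : {set T}) (x v : T) : bool :=
  [&& v \notin X, e v x & [forall z in X, e v z ==> (z == x)]].

Definition pr (T : finType) (e : rel T) (X : {set T}) (x : T) : T :=
  odflt x [pick v | priv e X x v].

Lemma priv_ex (T : finType) (e : rel T) (X : {set T}) (x z : T) :
  minimal_dominating e X -> x \in X -> z \in X -> z != x -> e x z ->
  priv e X x (pr e X x).
Proof.
move=> /andP[dom /forallP md] xX zX zx exz.
rewrite /pr; case: pickP => [v //|none]; exfalso.
have /implyP H := md (X :\ x).
have prop : X :\ x \proper X by rewrite properD1.
move: (H prop) => /forallPn[w]; rewrite negb_imply => /andP[wn /existsPn nw].
have wx : w != x.
  apply/eqP=> wx; subst w; move: (nw z); rewrite !inE zx zX exz //.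
have wX : w \notin X by move: wn; rewrite !inE wx.
move/forallP: dom => /(_ w) /implyP /(_ wX) /existsP[y /andP[yX ewy]].
have yx : y = x.
  apply/eqP; apply/negPn/negP=> yx; move: (nw y); rewrite !inE yx yX ewy //.
subst y.
move: (none w); rewrite /priv wX ewy /=; move/negP; apply.
apply/forallP=> u; apply/implyP=> uX; apply/implyP=> ewu.
apply/negPn/negP=> ux; move: (nw u); rewrite !inE ux uX ewu //.
Qed.

Lemma no2K2 (T : finType) (e : rel T) x y u v :
  symmetric e -> irreflexive e -> twoK2_free e ->
  e x y -> e u v -> ~~ e x u -> ~~ e x v -> ~~ e y u -> ~~ e y v -> False.
Proof.
move=> sym irr free exy euv nxu nxv nyu nyv; apply: free.
exists x, y, u, v; split=> //; last by rewrite nxu nxv nyu nyv.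
rewrite /= !inE !negb_or; apply/and4P; split; last by [].
- apply/and3P; split.
  + by apply/eqP=> E; subst y; rewrite irr in exy.
  + by apply/eqP=> E; subst u; rewrite euv in nxv.
  + by apply/eqP=> E; subst v; rewrite sym euv in nxu.
- apply/andP; split.
  + by apply/eqP=> E; subst u; rewrite euv in nyv.
  + by apply/eqP=> E; subst v; rewrite sym euv in nyu.
- by apply/eqP=> E; subst v; rewrite irr in euv.
Qed.

Lemma privP (T : finType) (e : rel T) (X : {set T}) x v :
  priv e X x v -> [/\ v \notin X, e v x & forall z, z \in X -> e v z -> z = x].
Proof.
move=> /and3P[vX evx /forallP H]; split=> // z zX evz.
by move: (H z); rewrite zX evz => /eqP.
Qed.

Lemma priv_nadj (T : finType) (e : rel T) (X : {set T}) x v c :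
  symmetric e -> priv e X x v -> c \in X -> c != x -> ~~ e c v.
Proof.
move=> sym /privP[_ _ H] cX cx; apply/negP; rewrite sym => /(H _ cX) E.
by rewrite E eqxx in cx.
Qed.

Lemma lemK (T : finType) (e : rel T) (X : {set T}) u v pu pv c d :
  symmetric e -> irreflexive e -> twoK2_free e ->
  priv e X u pu -> priv e X v pv -> e pu pv -> c \in X -> d \in X ->
  c != u -> c != v -> d != u -> d != v -> e c d -> False.
Proof.
move=> sym irr free Hu Hv epp cX dX cu cv du dv ecd.
apply: (no2K2 sym irr free ecd epp).
- exact: (priv_nadj sym Hu).
- exact: (priv_nadj sym Hv).
- exact: (priv_nadj sym Hu).
- exact: (priv_nadj sym Hv).
Qed.

Lemma lemPP (T : finType) (e : rel T) (X : {set T}) x z px pz :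
  symmetric e -> irreflexive e -> twoK2_free e ->
  priv e X x px -> priv e X z pz -> x \in X -> z \in X -> x != z ->
  ~~ e x z -> e px pz.
Proof.
move=> sym irr free Hx Hz xX zX xz nxz; apply/negPn/negP=> npp.
have [_ exp _] := privP Hx; have [_ ezp _] := privP Hz.
apply: (no2K2 sym irr free (x:=x) (y:=px) (u:=z) (v:=pz)) => //.
- by rewrite sym.
- by rewrite sym.
- by apply: (priv_nadj sym Hz).
- by rewrite sym; apply: (priv_nadj sym Hx); rewrite // eq_sym.
Qed.

Lemma lemL3 (T : finType) (e : rel T) (X B : {set T}) :
  irreflexive e -> symmetric e ->
  B \subset X -> (forall x, x \in B -> priv e X x (pr e X x)) ->
  independent e (X :\: B) ->
  (forall x z, x \in B -> z \in B -> x != z -> ~~ e (pr e X x) (pr e X z)) ->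
  #|X| <= alpha e.
Proof.
move=> irr sym BX Hp /forallP ind Hn.
set S := (X :\: B) :|: [set pr e X x | x in B].
have inj : {in B &, injective (pr e X)}.
  move=> x z xB zB E; have [_ _ H] := privP (Hp z zB).
  have [_ ex _] := privP (Hp x xB).
  apply: H; first by apply: (subsetP BX).
  by rewrite -E.
have disj : [disjoint (X :\: B) & [set pr e X x | x in B]].
  rewrite -setI_eq0; apply/eqP/setP=> w; rewrite !inE.
  apply/negP=> /andP[/andP[_ wX] /imsetP[x xB E]].
  have [nX _ _] := privP (Hp x xB); by rewrite E (negbTE nX) in wX.
have cS : #|S| = #|X|.
  rewrite /S cardsU.
  have -> : (X :\: B) :&: [set pr e X x | x in B] = set0.
    by apply/eqP; rewrite setI_eq0.
  rewrite cards0 subn0 card_in_imset //.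
  rewrite -(cardsID B X) addnC.
  by rewrite (setIidPr BX).
rewrite -cS; apply: leq_bigmax_cond.
apply/forallP=> u; apply/implyP=> uS; apply/forallP=> w; apply/implyP=> wS.
move: uS wS; rewrite !inE.
case/orP=> [uXB | /imsetP[x xB ->]]; case/orP=> [wXB | /imsetP[z zB ->]].
- by move: (ind u); rewrite inE uXB /= => /forallP /(_ w); rewrite inE wXB.
- move: uXB => /andP[uB uX]; apply: (priv_nadj sym (Hp z zB) uX).
  by apply/eqP=> E; subst u; rewrite zB in uB.
- move: wXB => /andP[wB wX]; rewrite sym; apply: (priv_nadj sym (Hp x xB) wX).
  by apply/eqP=> E; subst w; rewrite xB in wB.
- case: (eqVneq x z) => [->|xz]; first by rewrite irr.
  exact: Hn.
Qed.

Ltac fin s := solve [done | rewrite eq_sym; done | rewrite s; done | rewrite s eq_sym; done].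

Lemma hasP (T : finType) (e : rel T) (X : {set T}) x z :
  symmetric e -> irreflexive e ->
  minimal_dominating e X -> x \in X -> z \in X -> e x z -> priv e X x (pr e X x).
Proof.
move=> sym irr md xX zX exz; apply: (priv_ex md xX zX) => //.
by apply/eqP=> E; subst z; rewrite irr in exz.
Qed.

Lemma lemR (T : finType) (e : rel T) (X : {set T}) a b r z :
  symmetric e -> irreflexive e -> twoK2_free e -> minimal_dominating e X ->
  e a b -> a \in X -> b \in X -> r \in X -> r != a -> r != b ->
  ~~ e r a -> ~~ e r b -> z \in X -> ~~ e r z.
Proof.
move=> sym irr free md eab aX bX rX ra rb nra nrb zX; apply/negP=> erz.
have Hr := hasP sym irr md rX zX erz.
have [_ epr _] := privP Hr.
apply: (no2K2 sym irr free (x:=a) (y:=b) (u:=r) (v:=pr e X r)) => //.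
- by rewrite sym.
- by rewrite sym.
- by apply: (priv_nadj sym Hr); rewrite // eq_sym.
- by rewrite sym.
- by apply: (priv_nadj sym Hr); rewrite // eq_sym.
Qed.

Lemma Yclique (T : finType) (e : rel T) (X : {set T}) a b y z :
  symmetric e -> irreflexive e -> twoK2_free e -> minimal_dominating e X ->
  e a b -> a \in X -> b \in X -> y \in X -> z \in X ->
  y != a -> y != b -> z != a -> z != b -> y != z ->
  e y a || e y b -> e z a || e z b -> e y z.
Proof.
move=> sym irr free md eab aX bX yX zX ya yb za zb yz Hy Hz.
apply/negPn/negP=> nyz.
have Py : priv e X y (pr e X y).
  by case/orP: Hy => H; [apply: (hasP sym irr md yX aX H) | apply: (hasP sym irr md yX bX H)].
have Pz : priv e X z (pr e X z).
  by case/orP: Hz => H; [apply: (hasP sym irr md zX aX H) | apply: (hasP sym irr md zX bX H)].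
have epp := lemPP sym irr free Py Pz yX zX yz nyz.
apply: (lemK sym irr free Py Pz epp aX bX); fin sym.
Qed.

Lemma pairY (T : finType) (e : rel T) (X : {set T}) a b y z :
  symmetric e -> irreflexive e -> twoK2_free e -> minimal_dominating e X ->
  e a b -> a \in X -> b \in X -> y \in X -> z \in X ->
  y != a -> y != b -> z != a -> z != b -> y != z ->
  e y a || e y b -> e z a || e z b -> e y b.
Proof.
move=> sym irr free md eab aX bX yX zX ya yb za zb yz Hy Hz.
have eyz := Yclique sym irr free md eab aX bX yX zX ya yb za zb yz Hy Hz.
have ab : a != b by apply/eqP=> E; subst b; rewrite irr in eab.
apply/negPn/negP=> nyb.
have eya : e y a by move: Hy; rewrite (negbTE nyb) orbF.
have Py := hasP sym irr md yX aX eya.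
have Pz : priv e X z (pr e X z).
  by case/orP: Hz => H; [apply: (hasP sym irr md zX aX H) | apply: (hasP sym irr md zX bX H)].
have Pa := hasP sym irr md aX bX eab.
have Pb : priv e X b (pr e X b) by apply: (hasP sym irr md bX aX); rewrite sym.
have epyb := lemPP sym irr free Py Pb yX bX yb nyb.
case: (boolP (e z a)) => eza.
  apply: (lemK sym irr free Py Pb epyb aX zX); fin sym.
have ezb : e z b by move: Hz; rewrite (negbTE eza).
have epza := lemPP sym irr free Pz Pa zX aX za eza.
apply: (no2K2 sym irr free epyb epza).
- apply/negP=> H; apply: (lemK sym irr free Py Pz H aX bX); fin sym.
- apply/negP=> H; apply: (lemK sym irr free Py Pa H bX zX); fin sym.
- apply/negP=> H; apply: (lemK sym irr free Pb Pz H aX yX); fin sym.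
- apply/negP=> H; apply: (lemK sym irr free Pb Pa H yX zX); fin sym.
Qed.

Lemma pick2 (T : eqType) (a b y z u v : T) :
  uniq [:: a; b; y; z] ->
  exists c d, [/\ c \in [:: a; b; y; z], d \in [:: a; b; y; z], c != d &
     [&& c != u, c != v, d != u & d != v]].
Proof.
move=> U.
have ab : a != b by apply: contraTneq U => ->; rewrite /= !inE !eqxx /= ?orbT.
have ay : a != y by apply: contraTneq U => ->; rewrite /= !inE !eqxx /= ?orbT.
have az : a != z by apply: contraTneq U => ->; rewrite /= !inE !eqxx /= ?orbT.
have nby : b != y by apply: contraTneq U => ->; rewrite /= !inE !eqxx /= ?orbT ?andbF.
have bz : b != z by apply: contraTneq U => ->; rewrite /= !inE !eqxx /= ?orbT ?andbF.
have yz : y != z by apply: contraTneq U => ->; rewrite /= !inE !eqxx /= ?orbT ?andbF.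
have cand : forall c d, c \in [:: a; b; y; z] -> d \in [:: a; b; y; z] -> c != d ->
   c != u -> c != v -> d != u -> d != v ->
  exists c d, [/\ c \in [:: a; b; y; z], d \in [:: a; b; y; z], c != d &
     [&& c != u, c != v, d != u & d != v]].
  by move=> c d ? ? ? ? ? ? ?; exists c, d; split=> //; apply/and4P.
have i1 : a \in [:: a; b; y; z] by rewrite !inE eqxx.
have i2 : b \in [:: a; b; y; z] by rewrite !inE eqxx !orbT.
have i3 : y \in [:: a; b; y; z] by rewrite !inE eqxx !orbT.
have i4 : z \in [:: a; b; y; z] by rewrite !inE eqxx !orbT.
case: (eqVneq u a) => [E1|ua]; case: (eqVneq u b) => [E2|ub];
case: (eqVneq v a) => [E3|va]; case: (eqVneq v b) => [E4|vb];
case: (eqVneq u y) => [E5|uy]; case: (eqVneq v y) => [E6|vy]; subst;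
try solve [ apply: (cand a b); solve [done | rewrite eq_sym; done]
          | apply: (cand y z); solve [done | rewrite eq_sym; done]
          | apply: (cand a y); solve [done | rewrite eq_sym; done]
          | apply: (cand a z); solve [done | rewrite eq_sym; done]
          | apply: (cand b y); solve [done | rewrite eq_sym; done]
          | apply: (cand b z); solve [done | rewrite eq_sym; done]
          | by match goal with H : is_true (?x != ?x) |- _ => rewrite eqxx in H end ].

Qed.

Lemma indepMinus (T : finType) (e : rel T) (X : {set T}) a b :
  symmetric e -> irreflexive e -> twoK2_free e -> minimal_dominating e X ->
  e a b -> a \in X -> b \in X ->
  (forall y z, y \in X -> z \in X -> y != a -> y != b -> z != a -> z != b ->
     e y a || e y b -> e z a || e z b -> y = z) ->
  (forall y, y \in X -> y != a -> y != b -> ~~ e y a) ->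
  #|X| <= alpha e.
Proof.
move=> sym irr free md eab aX bX Yu Hna.
have ab : a != b by apply/eqP=> E; subst b; rewrite irr in eab.
apply: (lemL3 (B := [set b]) irr sym).
- by rewrite sub1set.
- move=> x; rewrite inE => /eqP ->; apply: (hasP sym irr md bX aX); by rewrite sym.
- apply/forallP=> u; apply/implyP; rewrite !inE => /andP[ub uX].
  apply/forallP=> w; apply/implyP; rewrite !inE => /andP[wb wX].
  apply/negP=> euw.
  have wu : w != u by apply/eqP=> E; subst w; rewrite irr in euw.
  case: (eqVneq u a) => [E|ua].
    subst u; have wa : w != a by [].
    by move: (Hna w wX wa wb); rewrite sym euw.
  have nua := Hna u uX ua ub.
  case: (boolP (e u b)) => eub; last first.
    by move: (lemR sym irr free md eab aX bX uX ua ub nua eub wX); rewrite euw.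
  case: (eqVneq w a) => [E|wa].
    by subst w; rewrite euw in nua.
  have nwa := Hna w wX wa wb.
  case: (boolP (e w b)) => ewb; last first.
    by move: (lemR sym irr free md eab aX bX wX wa wb nwa ewb uX); rewrite sym euw.
  have := Yu u w uX wX ua ub wa wb; rewrite eub ewb !orbT => /(_ isT isT) E.
  by rewrite E eqxx in wu.
- by move=> x z; rewrite !inE => /eqP -> /eqP ->; rewrite eqxx.
Qed.

Theorem lemma5p2 (T : finType) (e : rel T) (a b : T) (X : {set T}) :
  simple_graph e -> twoK2_free e -> e a b ->
  minimal_dominating e X -> a \in X -> b \in X -> alpha e < #|X| ->
  let N := [set v | (v != a) && (v != b) && (e v a || e v b)] in
  let Y := X :&: N in
  #|Y| = 1 /\ (forall y, y \in Y -> e y a /\ e y b).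
Proof.
move=> [sym irr] free eab md aX bX ha N Y.
have ab : a != b by apply/eqP=> E; subst b; rewrite irr in eab.
have eba : e b a by rewrite sym.
have inY : forall v, (v \in Y) = [&& v \in X, v != a, v != b & e v a || e v b].
  by move=> v; rewrite !inE -!andbA.
have nle : ~ (#|X| <= alpha e) by rewrite leqNgt ha.
have Yu : forall y z, y \in X -> z \in X -> y != a -> y != b -> z != a -> z != b ->
     e y a || e y b -> e z a || e z b -> y = z.
  move=> y z yX zX ya yb za zb Hy Hz; apply/eqP/negPn/negP => yz.
  have zy : z != y by rewrite eq_sym.
  have eyb := pairY sym irr free md eab aX bX yX zX ya yb za zb yz Hy Hz.
  have ezb := pairY sym irr free md eab aX bX zX yX za zb ya yb zy Hz Hy.
  have eya : e y a by apply: (pairY sym irr free md eba bX aX yX zX yb ya zb za yz); rewrite orbC.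
  have eza : e z a by apply: (pairY sym irr free md eba bX aX zX yX zb za yb ya zy); rewrite orbC.
  have eyz := Yclique sym irr free md eab aX bX yX zX ya yb za zb yz Hy Hz.
  have U : uniq [:: a; b; y; z].
    rewrite /= !inE !negb_or ab (eq_sym a y) ya (eq_sym a z) za.
    by rewrite (eq_sym b y) yb (eq_sym b z) zb yz.
  have inXs : forall c, c \in [:: a; b; y; z] -> c \in X.
    by move=> c; rewrite !inE => /or4P[] /eqP ->.
  have adj : forall c d, c \in [:: a; b; y; z] -> d \in [:: a; b; y; z] -> c != d -> e c d.
    move=> c d; rewrite !inE => /or4P[] /eqP -> /or4P[] /eqP ->; rewrite ?eqxx //= => _;
    fin sym.
  apply: nle.
  apply: (lemL3 (B := [set x in X | (x == a) || (x == b) || (e x a || e x b)]) irr sym).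
  - by apply/subsetP=> x; rewrite inE => /andP[].
  - move=> x; rewrite inE => /andP[xX /orP[/orP[]/eqP->|/orP[]H]].
    + exact: (hasP sym irr md aX bX eab).
    + exact: (hasP sym irr md bX aX eba).
    + exact: (hasP sym irr md xX aX H).
    + exact: (hasP sym irr md xX bX H).
  - apply/forallP=> u; apply/implyP; rewrite !inE => /andP[uB uX].
    apply/forallP=> w; apply/implyP; rewrite !inE => /andP[wB wX].
    rewrite uX /= !negb_or in uB; case/andP: uB => /andP[ua ub] /andP[nua nub].
    exact: (lemR sym irr free md eab aX bX uX ua ub nua nub wX).
  - move=> u v; rewrite !inE => /andP[uX Hu] /andP[vX Hv] uv.
    have Pu : priv e X u (pr e X u).
      case/orP: Hu => [/orP[]/eqP->|/orP[]H].
      + exact: (hasP sym irr md aX bX eab).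
      + exact: (hasP sym irr md bX aX eba).
      + exact: (hasP sym irr md uX aX H).
      + exact: (hasP sym irr md uX bX H).
    have Pv : priv e X v (pr e X v).
      case/orP: Hv => [/orP[]/eqP->|/orP[]H].
      + exact: (hasP sym irr md aX bX eab).
      + exact: (hasP sym irr md bX aX eba).
      + exact: (hasP sym irr md vX aX H).
      + exact: (hasP sym irr md vX bX H).
    apply/negP=> epp.
    have [c [d [cs ds cd /and4P[cu cv du dv]]]] := pick2 u v U.
    exact: (lemK sym irr free Pu Pv epp (inXs c cs) (inXs d ds) cu cv du dv (adj c d cs ds cd)).
have Yub : forall y z, y \in X -> z \in X -> y != b -> y != a -> z != b -> z != a ->
     e y b || e y a -> e z b || e z a -> y = z.
  move=> y z yX zX yb ya zb za Hy Hz; apply: Yu => //; by rewrite orbC.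
have [y yY] : exists y, y \in Y.
  case: (set_0Vmem Y) => [Y0|[y0 y0Y]]; last by exists y0.
  have none : forall w, w \notin Y by move=> w; rewrite Y0 inE.
  exfalso; apply: nle.
  apply: (indepMinus sym irr free md eab aX bX Yu).
  move=> w wX wa wb; apply/negP=> ewa; move: (none w); rewrite inY wX wa wb ewa //.
have both : forall y, y \in Y -> e y a /\ e y b.
  move=> y' y'Y; move: (y'Y); rewrite inY => /and4P[y'X y'a y'b _]; split.
  - apply/negPn/negP=> ny; apply: nle.
    apply: (indepMinus sym irr free md eab aX bX Yu).
    move=> w wX wa wb; apply/negP=> ewa.
    have E : w = y'.
      apply: (Yu w y' wX y'X wa wb y'a y'b); first by rewrite ewa.
      by move: y'Y; rewrite inY => /and4P[].
    by subst w; rewrite ewa in ny.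
  - apply/negPn/negP=> ny; apply: nle.
    apply: (indepMinus sym irr free md eba bX aX Yub).
    move=> w wX wb wa; apply/negP=> ewb.
    have E : w = y'.
      apply: (Yu w y' wX y'X wa wb y'a y'b); first by rewrite ewb orbT.
      by move: y'Y; rewrite inY => /and4P[].
    by subst w; rewrite ewb in ny.
split=> //.
apply/eqP; rewrite eqn_leq; apply/andP; split.
- apply/card_le1_eqP=> u v; rewrite !inY => /and4P[uX ua ub Hu] /and4P[vX va vb Hv].
  exact: Yu.
- by apply/card_gt0P; exists y.
Qed.
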